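(* Let $\alpha=\{a_k\}_{k\ge1}$ be a sequence of positive numbers with $a_k\to\infty$ and $x_\alpha=1$, and let $j\ge2$. If there is $N_0$ such that $$\int_0^1 L(x;\alpha;j)\,F_{N_0}(x;\alpha)\,|\ln x|^{j-1}\frac{dx}{x}<\infty,$$ then $\lim_{N\to\infty}E[U_j^N]=I(\alpha;j)<\infty$.
   Context: For $N\ge2$, coupon type $k\in\{1,\dots,N\}$ has probability $a_k/\sum_{i=1}^Na_i$; $U_j^N$ is the number of empty album places of the $j$-th collector when the first collector completes her set (each collector passes duplicates to the next one), with $$E[U_j^N]=\sum_{k=1}^N\int_0^\infty a_k e^{-a_k t}\frac{(a_kt)^{j-1}}{(j-1)!}\prod_{i\ne k,\,1\le i\le N}\big(1-e^{-a_i t}\big)\,dt.$$ $x_\alpha:=\inf\{x\in[0,1]:\sum_{k}x^{a_k}=\infty\}$. For $x\in(0,x_\alpha)$: $L(x;\alpha;j):=\sum_{k=1}^\infty a_k^j\frac{x^{a_k}}{1-x^{a_k}}$, $F(x;\alpha):=\prod_{k=1}^\infty(1-x^{a_k})$; $F_{N}(x;\alpha):=\prod_{k=1}^{N}(1-x^{a_k})$; and $I(\alpha;j):=\frac{1}{(j-1)!}\int_0^{x_\alpha}L(x;\alpha;j)F(x;\alpha)|\ln x|^{j-1}\frac{dx}{x}$. *)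

(* Defs.v *)
From Stdlib Require Import Reals Lra Lia Arith Factorial Classical ClassicalEpsilon.
Open Scope R_scope.

(* Convention: the sequence alpha = (a_1, a_2, ...) is given as  a : nat -> R
   with  a k  standing for  a_{k+1}  (0-based indexing).  Coupon types
   1..N correspond to indices 0..N-1. *)

(* real power x^p for x >= 0 (with 0^p = 0, used only for p > 0) *)
Definition rpow (x p : R) : R := if Rlt_dec 0 x then Rpower x p else 0.

Fixpoint fsum (n : nat) (f : nat -> R) : R :=
  match n with O => 0 | S m => fsum m f + f m end.
Fixpoint fprod (n : nat) (f : nat -> R) : R :=
  match n with O => 1 | S m => fprod m f * f m end.

Definition seq_lim (u : nat -> R) : R :=
  epsilon (inhabits 0) (fun l => Un_cv u l).

Definition series (u : nat -> R) : R := seq_lim (fun n => fsum (S n) u).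

Definition infprod (u : nat -> R) : R := seq_lim (fun n => fprod (S n) u).

Definition is_inf (S : R -> Prop) (m : R) : Prop :=
  (forall x, S x -> m <= x) /\ (forall b, (forall x, S x -> b <= x) -> b <= m).

Definition div_set (a : nat -> R) (x : R) : Prop :=
  0 <= x <= 1 /\ ~ (exists l, infinite_sum (fun k => rpow x (a k)) l).

Definition x_alpha (a : nat -> R) : R := epsilon (inhabits 0) (is_inf (div_set a)).

Definition int01_cv (f : R -> R) (l : R) : Prop :=
  (forall u v, 0 < u -> u <= v -> v < 1 -> inhabited (Riemann_integrable f u v)) /\
  forall eps, 0 < eps -> exists d, 0 < d /\
    forall u v (pr : Riemann_integrable f u v),
      0 < u < d -> 1 - d < v < 1 -> u <= v -> Rabs (RiemannInt pr - l) < eps.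

Definition int0inf_cv (f : R -> R) (l : R) : Prop :=
  (forall u v, 0 < u -> u <= v -> inhabited (Riemann_integrable f u v)) /\
  forall eps, 0 < eps -> exists d M, 0 < d /\
    forall u v (pr : Riemann_integrable f u v),
      0 < u < d -> M < v -> u <= v -> Rabs (RiemannInt pr - l) < eps.

Definition int01 (f : R -> R) : R := epsilon (inhabits 0) (int01_cv f).
Definition int0inf (f : R -> R) : R := epsilon (inhabits 0) (int0inf_cv f).

Definition Lfun (a : nat -> R) (j : nat) (x : R) : R :=
  series (fun k => a k ^ j * rpow x (a k) / (1 - rpow x (a k))).

Definition Ffun (a : nat -> R) (x : R) : R :=
  infprod (fun k => 1 - rpow x (a k)).

Definition FNfun (a : nat -> R) (N : nat) (x : R) : R :=
  fprod N (fun k => 1 - rpow x (a k)).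

Definition I_integrand (a : nat -> R) (j : nat) (x : R) : R :=
  / INR (fact (j - 1)) * (Lfun a j x * Ffun a x * Rabs (ln x) ^ (j - 1) / x).

Definition Ival (a : nat -> R) (j : nat) : R := int01 (I_integrand a j).

Definition EU_integrand (a : nat -> R) (j N : nat) (t : R) : R :=
  fsum N (fun k =>
    a k * exp (- (a k * t)) * (a k * t) ^ (j - 1) / INR (fact (j - 1)) *
    fprod N (fun i => if Nat.eq_dec i k then 1 else 1 - exp (- (a i * t)))).

Definition EU (a : nat -> R) (j N : nat) : R := int0inf (EU_integrand a j N).

(* Main.v *)
Require Import Defs.
From Stdlib Require Import Reals Lra Lia Arith ZArith Factorial Classical ClassicalEpsilon.
From Coquelicot Require Import Coquelicot.
Open Scope R_scope.

Lemma fsum_ext_lt n u w : (forall k, (k < n)%nat -> u k = w k) -> fsum n u = fsum n w.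
Proof. induction n; simpl; intros H; auto. rewrite IHn by (intros; apply H; lia). rewrite H by lia. auto. Qed.

Lemma fprod_ext_lt n u w : (forall k, (k < n)%nat -> u k = w k) -> fprod n u = fprod n w.
Proof. induction n; simpl; intros H; auto. rewrite IHn by (intros; apply H; lia). rewrite H by lia. auto. Qed.

Lemma fsum_nonneg n u : (forall k, 0 <= u k) -> 0 <= fsum n u.
Proof. induction n; simpl; intros H. lra. specialize (IHn H). specialize (H n). lra. Qed.

Lemma fsum_mono n m u : (forall k, 0 <= u k) -> (n <= m)%nat -> fsum n u <= fsum m u.
Proof. intros H Hnm. induction Hnm. lra. simpl. specialize (H m). lra. Qed.

Lemma fsum_scal_r n u c : fsum n (fun k => u k * c) = fsum n u * c.
Proof. induction n; simpl. ring. rewrite IHn. ring. Qed.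

Lemma fsum_le n u w : (forall k, u k <= w k) -> fsum n u <= fsum n w.
Proof. induction n; simpl; intros H. lra. specialize (IHn H). specialize (H n). lra. Qed.

Lemma fsum_diff_le N n u w : (forall k, u k <= w k) -> (N <= n)%nat ->
  fsum n u - fsum N u <= fsum n w - fsum N w.
Proof. intros H Hn. induction Hn. lra. simpl. specialize (H m). lra. Qed.

Lemma sum_f_R0_fsum f N : sum_f_R0 f N = fsum (S N) f.
Proof. induction N; simpl. ring. rewrite IHN. simpl. ring. Qed.

Lemma fprod_nonneg n u : (forall k, 0 <= u k) -> 0 <= fprod n u.
Proof. induction n; simpl; intros H. lra. apply Rmult_le_pos; auto. Qed.

Lemma fprod_le1 n u : (forall k, 0 <= u k <= 1) -> fprod n u <= 1.
Proof. induction n; simpl; intros H. lra. specialize (IHn H). destruct (H n).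
 assert (0 <= fprod n u) by (apply fprod_nonneg; intros; apply H). nra. Qed.

Lemma fprod_decr n m u : (forall k, 0 <= u k <= 1) -> (n <= m)%nat -> fprod m u <= fprod n u.
Proof. intros H Hnm. induction Hnm. lra. simpl. destruct (H m).
 assert (0 <= fprod m u) by (apply fprod_nonneg; intros; apply H). nra. Qed.

Lemma fprod_remove n k g : (k < n)%nat ->
  fprod n (fun i => if Nat.eq_dec i k then 1 else g i) * g k = fprod n g.
Proof.
  induction n; intros Hk. lia. simpl.
  destruct (Nat.eq_dec n k).
  - subst. rewrite (fprod_ext_lt k _ g). ring. intros i Hi. destruct (Nat.eq_dec i k); auto; lia.
  - rewrite <- IHn by lia. ring.
Qed.

Lemma cv_le u l c N : Un_cv u l -> (forall n, (N <= n)%nat -> u n <= c) -> l <= c.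
Proof.
  intros Hu Hc. destruct (Rle_dec l c) as [|Hlt]; auto. exfalso.
  destruct (Hu (l - c)) as [M HM]. lra.
  specialize (HM (max M N) ltac:(lia)). specialize (Hc (max M N) ltac:(lia)).
  unfold Rdist in HM. apply Rabs_def2 in HM. lra.
Qed.

Lemma cv_ge u l c N : Un_cv u l -> (forall n, (N <= n)%nat -> c <= u n) -> c <= l.
Proof.
  intros Hu Hc. destruct (Rle_dec c l) as [|Hlt]; auto. exfalso.
  destruct (Hu (c - l)) as [M HM]. lra.
  specialize (HM (max M N) ltac:(lia)). specialize (Hc (max M N) ltac:(lia)).
  unfold Rdist in HM. apply Rabs_def2 in HM. lra.
Qed.

Lemma cv_shift u l : Un_cv u l -> Un_cv (fun n => u (S n)) l.
Proof. intros H e He. destruct (H e He) as [N HN]. exists N. intros n Hn. apply HN. lia. Qed.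

Lemma cv_unshift u l : Un_cv (fun n => u (S n)) l -> Un_cv u l.
Proof. intros H e He. destruct (H e He) as [N HN]. exists (S N). intros n Hn.
  destruct n. lia. apply HN. lia. Qed.

Lemma seq_lim_eq u l : Un_cv u l -> seq_lim u = l.
Proof.
  intros H. unfold seq_lim. apply (UL_sequence u). 2: auto.
  apply epsilon_spec. eauto.
Qed.

Lemma series_eq u l : Un_cv (fun n => fsum n u) l -> series u = l.
Proof. intros H. unfold series. apply seq_lim_eq. apply (cv_shift (fun n => fsum n u)). auto. Qed.

Lemma infprod_eq u l : Un_cv (fun n => fprod n u) l -> infprod u = l.
Proof. intros H. unfold infprod. apply seq_lim_eq. apply (cv_shift (fun n => fprod n u)). auto. Qed.

Lemma fsum_cv u B : (forall k, 0 <= u k) -> (forall n, fsum n u <= B) ->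
  exists l, Un_cv (fun n => fsum n u) l.
Proof.
  intros H0 HB. destruct (growing_cv (fun n => fsum n u)) as [l Hl].
  - intros n. simpl. specialize (H0 n). lra.
  - exists B. intros x [n ->]. auto.
  - eauto.
Qed.

Lemma fsum_le_lim u l n : (forall k, 0 <= u k) -> Un_cv (fun n => fsum n u) l -> fsum n u <= l.
Proof. intros H Hl. apply (cv_ge _ _ _ n Hl). intros m Hm. apply fsum_mono; auto. Qed.

Lemma cv_minus_const u l c : Un_cv u l -> Un_cv (fun n => c - u n) (c - l).
Proof. intros H e He. destruct (H e He) as [N HN]. exists N. intros n Hn. specialize (HN n Hn).
  unfold Rdist in *. replace (c - u n - (c - l)) with (- (u n - l)) by ring. rewrite Rabs_Ropp. auto. Qed.


Lemma rpow_pos_eq x p : 0 < x -> rpow x p = exp (p * ln x).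
Proof. intros H. unfold rpow, Rpower. destruct (Rlt_dec 0 x); [auto|lra]. Qed.

Lemma rpow_01 x p : 0 < x < 1 -> 0 < p -> 0 < rpow x p < 1.
Proof.
  intros Hx Hp. rewrite rpow_pos_eq by lra. split. apply exp_pos.
  rewrite <- exp_0. apply exp_increasing.
  assert (ln x < 0) by (rewrite <- ln_1; apply ln_increasing; lra). nra.
Qed.

Lemma rpow_mono x y p : 0 < x <= y -> 0 < p -> rpow x p <= rpow y p.
Proof.
  intros Hx Hp. rewrite !rpow_pos_eq by lra.
  destruct (Req_dec x y). subst; lra.
  left. apply exp_increasing. assert (ln x < ln y) by (apply ln_increasing; lra). nra.
Qed.

Lemma rpow_1 p : rpow 1 p = 1.
Proof. rewrite rpow_pos_eq by lra. rewrite ln_1, Rmult_0_r, exp_0. auto. Qed.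

Lemma inf_exists (a : nat -> R) : exists m, is_inf (div_set a) m.
Proof.
  set (E := fun y => div_set a (- y)).
  assert (HE : exists y, E y).
  { exists (-1). unfold E, div_set. replace (- -1) with 1 by lra. split. lra.
    intros [l Hl]. destruct (Hl 1) as [N HN]. lra.
    specialize (HN (N + Z.to_nat (up (Rabs l)))%nat ltac:(lia)).
    set (M := (N + Z.to_nat (up (Rabs l)))%nat) in *.
    assert (Hs : forall n, sum_f_R0 (fun k => rpow 1 (a k)) n = INR (S n)).
    { induction n; simpl. rewrite rpow_1. auto. rewrite IHn, rpow_1. destruct n; simpl; ring. }
    rewrite Hs in HN. unfold Rdist in HN. apply Rabs_def2 in HN.
    assert (INR M >= IZR (up (Rabs l))).
    { unfold M. rewrite plus_INR. rewrite (INR_IZR_INZ (Z.to_nat _)). rewrite Z2Nat.id.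
      pose proof (pos_INR N). lra.
      destruct (archimed (Rabs l)). apply le_IZR. pose proof (Rabs_pos l). lra. }
    destruct (archimed (Rabs l)). rewrite S_INR in HN. pose proof (Rle_abs l). lra. }
  assert (HB : bound E).
  { exists 0. intros y [Hy _]. lra. }
  destruct (completeness E HB HE) as [m [Hub Hlub]].
  exists (-m). split.
  - intros x Hx. assert (E (-x)) by (unfold E; rewrite Ropp_involutive; auto).
    specialize (Hub _ H). lra.
  - intros b Hb. assert (m <= - b). apply Hlub. intros y Hy. specialize (Hb _ Hy). lra. lra.
Qed.

Lemma summable_w (a : nat -> R) w : x_alpha a = 1 -> 0 < w < 1 ->
  exists S, Un_cv (fun n => fsum n (fun k => rpow w (a k))) S.
Proof.
  intros Hx Hw.
  assert (Hi : is_inf (div_set a) 1).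
  { rewrite <- Hx. unfold x_alpha. apply epsilon_spec. apply inf_exists. }
  destruct (classic (exists l, infinite_sum (fun k => rpow w (a k)) l)) as [[l Hl]|Hn].
  - exists l. apply cv_unshift. intros e He. destruct (Hl e He) as [N HN]. exists N.
    intros n Hn. rewrite <- sum_f_R0_fsum. apply HN. auto.
  - exfalso. destruct Hi as [Hi _]. assert (div_set a w) by (split; [lra|auto]).
    specialize (Hi _ H). lra.
Qed.


Lemma exp_pow n y : exp (INR n * y) = exp y ^ n.
Proof. induction n. simpl. rewrite Rmult_0_l, exp_0. auto.
  rewrite S_INR. replace ((INR n + 1) * y) with (INR n * y + y) by ring.
  rewrite exp_plus, IHn. simpl. ring. Qed.

Lemma exp_ge_pow n z : (0 < n)%nat -> 0 <= z -> (z / INR n) ^ n <= exp z.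
Proof.
  intros Hn Hz. assert (HnR : 0 < INR n) by (apply lt_0_INR; auto).
  replace z with (INR n * (z / INR n)) at 2 by (field; lra).
  rewrite exp_pow. apply pow_incr. split.
  apply Rmult_le_pos; [auto| left; apply Rinv_0_lt_compat; auto].
  pose proof (exp_ineq1_le (z / INR n)). lra.
Qed.

Definition tt (a : nat -> R) (j : nat) (x : R) (k : nat) : R :=
  a k ^ j * rpow x (a k) / (1 - rpow x (a k)).
Definition PP (a : nat -> R) (x : R) (k : nat) : R := rpow x (a k).

Section S.
Variables (a : nat -> R) (j : nat).
Hypothesis Hpos : forall k, 0 < a k.
Hypothesis Hinf : cv_infty a.
Hypothesis Hx : x_alpha a = 1.

Lemma PP_01 x k : 0 < x < 1 -> 0 < PP a x k < 1.
Proof. intros. apply rpow_01; auto. Qed.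

Lemma tt_nonneg x k : 0 < x < 1 -> 0 <= tt a j x k.
Proof. intros H. unfold tt. pose proof (rpow_01 x (a k) H (Hpos k)).
  pose proof (pow_le (a k) j (Rlt_le _ _ (Hpos k))).
  apply Rmult_le_pos. nra. left; apply Rinv_0_lt_compat; lra. Qed.

Lemma tt_mono x y k : 0 < x <= y -> y < 1 -> tt a j x k <= tt a j y k.
Proof. intros H1 H2. unfold tt.
  pose proof (rpow_01 x (a k) ltac:(lra) (Hpos k)).
  pose proof (rpow_01 y (a k) ltac:(lra) (Hpos k)).
  pose proof (rpow_mono x y (a k) H1 (Hpos k)).
  pose proof (pow_le (a k) j (Rlt_le _ _ (Hpos k))).
  set (p := rpow x (a k)) in *. set (q := rpow y (a k)) in *.
  unfold Rdiv. rewrite !Rmult_assoc. apply Rmult_le_compat_l; auto.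
  replace (p * / (1 - p)) with (/(1-p) - 1) by (field; lra).
  replace (q * / (1 - q)) with (/(1-q) - 1) by (field; lra).
  apply Rplus_le_compat_r. apply Rinv_le_contravar; lra.
Qed.

Lemma tt_bound v : 0 < v < 1 -> exists C K, 0 <= C /\
  forall k, (K <= k)%nat -> tt a j v k <= C * rpow ((1+v)/2) (a k).
Proof.
  intros Hv. set (w := (1+v)/2). assert (Hw : v < w < 1) by (unfold w; lra).
  set (c := ln w - ln v). assert (Hc : 0 < c) by (unfold c; pose proof (ln_increasing v w ltac:(lra) ltac:(lra)); lra).
  set (n := S j). set (D := (INR n / c) ^ n).
  assert (HD : 0 <= D) by (apply pow_le; unfold n; apply Rmult_le_pos; [apply pos_INR| left; apply Rinv_0_lt_compat; auto]).
  destruct (Hinf 1) as [K HK].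
  exists (D / (1 - v)), K. split. apply Rmult_le_pos; auto. left; apply Rinv_0_lt_compat; lra.
  intros k Hk. specialize (HK k Hk). unfold tt.
  set (b := a k) in *.
  assert (Hlnv : ln v < 0) by (rewrite <- ln_1; apply ln_increasing; lra).
  assert (Hva : rpow v b <= v).
  { rewrite rpow_pos_eq by lra. rewrite <- (exp_ln v) at 2 by lra.
    destruct (Req_dec b 1). subst b; rewrite H; rewrite Rmult_1_l; lra.
    left; apply exp_increasing; nra. }
  assert (Hvp : 0 < rpow v b < 1) by (apply rpow_01; auto; lra).
  assert (Hsplit : rpow v b = rpow w b * exp (- (c * b))).
  { rewrite !rpow_pos_eq by lra. rewrite <- exp_plus. f_equal. unfold c. ring. }
  assert (Hkey : b ^ j <= D * exp (c * b)).
  { assert (HnR : INR n = INR j + 1) by (unfold n; rewrite S_INR; auto).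
    pose proof (exp_ge_pow n (c * b) ltac:(unfold n; lia) ltac:(nra)).
    assert (Hpos' : 0 < INR n) by (rewrite HnR; pose proof (pos_INR j); lra).
    assert (D * ((c * b) / INR n) ^ n = b ^ n).
    { unfold D. rewrite <- Rpow_mult_distr. f_equal. field. split; lra. }
    assert (b ^ j <= b ^ n) by (apply Rle_pow; unfold n; lia || lra).
    assert (D * ((c * b) / INR n) ^ n <= D * exp (c * b)) by (apply Rmult_le_compat_l; auto).
    lra. }
  rewrite Hsplit.
  assert (0 < exp (- (c*b))) by apply exp_pos.
  assert (exp (c * b) * exp (- (c * b)) = 1) by (rewrite <- exp_plus; replace (c * b + - (c * b)) with 0 by ring; apply exp_0).
  assert (0 < rpow w b) by (apply rpow_01; auto; lra).
  assert (b ^ j * exp (- (c * b)) <= D).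
  { apply Rmult_le_compat_r with (r := exp (- (c*b))) in Hkey. 2: lra.
    rewrite Rmult_assoc, H0, Rmult_1_r in Hkey. auto. }
  unfold Rdiv. apply Rmult_le_reg_r with (1 - rpow w b * exp (- (c * b))). rewrite <- Hsplit. lra.
  rewrite Rmult_assoc, Rinv_l by (rewrite <- Hsplit; lra). rewrite Rmult_1_r.
  rewrite <- Hsplit.
  assert (HH : b ^ j * rpow v b <= D * rpow w b).
  { rewrite Hsplit. replace (b ^ j * (rpow w b * exp (- (c * b)))) with ((b ^ j * exp (- (c * b))) * rpow w b) by ring.
    apply Rmult_le_compat_r; lra. }
  assert (1 - v <= 1 - rpow v b) by lra.
  assert (D * / (1 - v) * rpow w b * (1 - v) <= D * / (1 - v) * rpow w b * (1 - rpow v b)).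
  { apply Rmult_le_compat_l; auto. apply Rmult_le_pos. apply Rmult_le_pos; auto. left; apply Rinv_0_lt_compat; lra. lra. }
  replace (D * / (1 - v) * rpow w b * (1 - v)) with (D * rpow w b) in H4 by (field; lra).
  lra.
Qed.

Lemma fsum_tail_bound (u w : nat -> R) C K n : 0 <= C -> (forall k, 0 <= u k) -> (forall k, 0 <= w k) ->
  (forall k, (K <= k)%nat -> u k <= C * w k) -> fsum n u <= fsum K u + C * fsum n w.
Proof.
  intros HC Hu Hw H. induction n; simpl.
  - pose proof (fsum_nonneg K u Hu). lra.
  - destruct (le_lt_dec K n).
    + specialize (H n l). nra.
    + assert (fsum (S n) u <= fsum K u) by (apply fsum_mono; auto).
      simpl in H0. pose proof (fsum_nonneg n w Hw). specialize (Hw n). nra.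
Qed.

Lemma L_cv x : 0 < x < 1 -> Un_cv (fun n => fsum n (tt a j x)) (Lfun a j x).
Proof.
  intros H. destruct (tt_bound x H) as [C [K [HC HK]]].
  destruct (summable_w a ((1+x)/2) Hx ltac:(lra)) as [S HS].
  assert (Hw : forall k, 0 <= rpow ((1+x)/2) (a k)) by (intros k; pose proof (rpow_01 ((1+x)/2) (a k) ltac:(lra) (Hpos k)); lra).
  destruct (fsum_cv (tt a j x) (fsum K (tt a j x) + C * S)) as [l Hl].
  - intros; apply tt_nonneg; auto.
  - intros n. eapply Rle_trans. apply (fsum_tail_bound _ (fun k => rpow ((1 + x) / 2) (a k)) C K); auto. intros; apply tt_nonneg; auto.
    pose proof (fsum_le_lim _ S n Hw HS). nra.
  - unfold Lfun. replace (series _) with l. auto. symmetry. apply series_eq. auto.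
Qed.

Lemma cv_sub_const u l c : Un_cv u l -> Un_cv (fun n => u n - c) (l - c).
Proof. intros H e He. destruct (H e He) as [N HN]. exists N. intros n Hn. specialize (HN n Hn).
  unfold Rdist in *. replace (u n - c - (l - c)) with (u n - l) by ring. auto. Qed.

Lemma L_tail x v N : 0 < x <= v -> v < 1 ->
  0 <= Lfun a j x - fsum N (tt a j x) <= Lfun a j v - fsum N (tt a j v).
Proof.
  intros H1 H2. pose proof (L_cv x ltac:(lra)) as Lx. pose proof (L_cv v ltac:(lra)) as Lv.
  split.
  - pose proof (fsum_le_lim _ _ N (fun k => tt_nonneg x k ltac:(lra)) Lx). lra.
  - apply (cv_le _ _ _ N (cv_sub_const _ _ (fsum N (tt a j x)) Lx)).
    intros n Hn. eapply Rle_trans. apply (fsum_diff_le N n (tt a j x) (tt a j v)); auto. intros; apply tt_mono; auto.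
    pose proof (fsum_le_lim _ _ n (fun k => tt_nonneg v k ltac:(lra)) Lv). lra.
Qed.

Lemma L_nonneg x : 0 < x < 1 -> 0 <= Lfun a j x.
Proof. intros H. pose proof (L_tail x x 0 ltac:(lra) ltac:(lra)). simpl in H0. lra. Qed.

Lemma L_le x v : 0 < x <= v -> v < 1 -> Lfun a j x <= Lfun a j v.
Proof. intros H1 H2. pose proof (L_tail x v 0 H1 H2). simpl in H. lra. Qed.

Lemma LN_le_L x N : 0 < x < 1 -> fsum N (tt a j x) <= Lfun a j x.
Proof. intros H. pose proof (L_tail x x N ltac:(lra) ltac:(lra)). lra. Qed.

Lemma FN_terms x : 0 < x < 1 -> forall k, 0 <= 1 - rpow x (a k) <= 1.
Proof. intros H k. pose proof (rpow_01 x (a k) H (Hpos k)). lra. Qed.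

Lemma F_cv x : 0 < x < 1 -> Un_cv (fun n => FNfun a n x) (Ffun a x).
Proof.
  intros H. destruct (decreasing_cv (fun n => FNfun a n x)) as [l Hl].
  - intros n. unfold FNfun. simpl. pose proof (FN_terms x H n).
    pose proof (fprod_nonneg n (fun k => 1 - rpow x (a k)) (fun k => proj1 (FN_terms x H k))). nra.
  - exists 0. intros y [n ->]. unfold opp_seq, FNfun.
    pose proof (fprod_nonneg n _ (fun k => proj1 (FN_terms x H k))). lra.
  - unfold Ffun. replace (infprod _) with l. auto. symmetry. apply infprod_eq. auto.
Qed.

Lemma FN_diff x N M : 0 < x < 1 -> (N <= M)%nat ->
  FNfun a N x - FNfun a M x <= fsum M (PP a x) - fsum N (PP a x).
Proof.
  intros H HNM. induction HNM. lra. unfold FNfun in *. simpl.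
  pose proof (fprod_le1 m _ (FN_terms x H)). pose proof (fprod_nonneg m _ (fun k => proj1 (FN_terms x H k))).
  pose proof (PP_01 x m H). unfold PP in *. nra.
Qed.

Lemma FN_nonneg x N : 0 < x < 1 -> 0 <= FNfun a N x.
Proof. intros H. apply fprod_nonneg. intros k; apply (FN_terms x H). Qed.

Lemma FN_le1 x N : 0 < x < 1 -> FNfun a N x <= 1.
Proof. intros H. apply fprod_le1. apply (FN_terms x H). Qed.

Lemma F_le_FN x N : 0 < x < 1 -> Ffun a x <= FNfun a N x.
Proof. intros H. apply (cv_le _ _ _ N (F_cv x H)). intros n Hn. apply fprod_decr; auto. apply (FN_terms x H). Qed.

Lemma F_nonneg x : 0 < x < 1 -> 0 <= Ffun a x.
Proof. intros H. apply (cv_ge _ _ _ 0 (F_cv x H)). intros. apply FN_nonneg; auto. Qed.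

Lemma FN_le_FN x N M : 0 < x < 1 -> (N <= M)%nat -> FNfun a M x <= FNfun a N x.
Proof. intros. apply fprod_decr; auto. apply (FN_terms x H). Qed.

Lemma F_tail x v S N : 0 < x <= v -> v < 1 -> Un_cv (fun n => fsum n (PP a v)) S ->
  0 <= FNfun a N x - Ffun a x <= S - fsum N (PP a v).
Proof.
  intros H1 H2 HS. split. pose proof (F_le_FN x N ltac:(lra)). lra.
  assert (Hc : Un_cv (fun M => FNfun a N x - FNfun a M x) (FNfun a N x - Ffun a x)).
  { apply cv_minus_const. apply F_cv. lra. }
  apply (cv_le _ _ _ N Hc). intros M HM.
  eapply Rle_trans. apply FN_diff; auto. lra.
  eapply Rle_trans. apply (fsum_diff_le N M (PP a x) (PP a v)); auto. intros k; apply rpow_mono; auto.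
  pose proof (fsum_le_lim _ _ M (fun k => Rlt_le _ _ (proj1 (PP_01 v k ltac:(lra)))) HS). lra.
Qed.

End S.


Definition int01' (f : R -> R) (l : R) : Prop :=
  (forall u v, 0 < u -> u <= v -> v < 1 -> ex_RInt f u v) /\
  forall eps, 0 < eps -> exists d, 0 < d /\
    forall u v, 0 < u < d -> 1 - d < v < 1 -> u <= v -> Rabs (RInt f u v - l) < eps.

Lemma int01_iff f l : int01_cv f l <-> int01' f l.
Proof.
  split.
  - intros [H1 H2]. split.
    + intros u v Hu Huv Hv. destruct (H1 u v Hu Huv Hv) as [pr]. apply ex_RInt_Reals_1; auto.
    + intros eps He. destruct (H2 eps He) as [d [Hd Hd2]]. exists d. split; auto.
      intros u v Hu Hv Huv. destruct (H1 u v ltac:(lra) Huv ltac:(lra)) as [pr].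
      rewrite (RInt_Reals f u v pr). apply Hd2; auto.
  - intros [H1 H2]. split.
    + intros u v Hu Huv Hv. constructor. apply ex_RInt_Reals_0; auto.
    + intros eps He. destruct (H2 eps He) as [d [Hd Hd2]]. exists d. split; auto.
      intros u v pr Hu Hv Huv. rewrite <- (RInt_Reals f u v pr). apply Hd2; auto.
Qed.

Lemma int01'_unique f l1 l2 : int01' f l1 -> int01' f l2 -> l1 = l2.
Proof.
  intros [_ H1] [_ H2]. apply Rminus_diag_uniq. apply Rabs_eq_0.
  destruct (Rle_lt_or_eq_dec 0 (Rabs (l1 - l2)) (Rabs_pos _)) as [Hp|]; auto. exfalso.
  set (e := Rabs (l1 - l2) / 2).
  destruct (H1 e ltac:(unfold e; lra)) as [d1 [Hd1 P1]].
  destruct (H2 e ltac:(unfold e; lra)) as [d2 [Hd2 P2]].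
  set (d := Rmin (Rmin d1 d2) (1/2)).
  assert (0 < d) by (unfold d; repeat apply Rmin_pos; lra).
  assert (d <= d1 /\ d <= d2 /\ d <= 1/2) by (unfold d; repeat split;
    [eapply Rle_trans; [apply Rmin_l|apply Rmin_l] | eapply Rle_trans; [apply Rmin_l|apply Rmin_r] | apply Rmin_r]).
  specialize (P1 (d/2) (1 - d/2) ltac:(lra) ltac:(lra) ltac:(lra)).
  specialize (P2 (d/2) (1 - d/2) ltac:(lra) ltac:(lra) ltac:(lra)).
  assert (Rabs (l1 - l2) <= Rabs (RInt f (d/2) (1-d/2) - l2) + Rabs (RInt f (d/2) (1-d/2) - l1)).
  { replace (l1 - l2) with ((RInt f (d/2) (1-d/2) - l2) - (RInt f (d/2) (1-d/2) - l1)) by ring.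
    eapply Rle_trans. apply Rabs_triang. rewrite Rabs_Ropp. lra. }
  unfold e in *. lra.
Qed.

Lemma int01'_scal f l c : int01' f l -> int01' (fun x => c * f x) (c * l).
Proof.
  intros [H1 H2]. split.
  - intros u v Hu Huv Hv. apply (ex_RInt_scal f u v c). auto.
  - intros eps He. destruct (H2 (eps / (Rabs c + 1))) as [d [Hd P]].
    apply Rdiv_lt_0_compat; auto. pose proof (Rabs_pos c); lra.
    exists d. split; auto. intros u v Hu Hv Huv.
    assert (Es : RInt (fun x => c * f x) u v = c * RInt f u v) by exact (RInt_scal f u v c (H1 u v ltac:(lra) Huv ltac:(lra))).
    rewrite Es.
    replace (c * RInt f u v - c * l) with (c * (RInt f u v - l)) by ring.
    rewrite Rabs_mult. specialize (P u v Hu Hv Huv).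
    assert (Rabs c * Rabs (RInt f u v - l) <= Rabs c * (eps / (Rabs c + 1))).
    { apply Rmult_le_compat_l. apply Rabs_pos. lra. }
    assert (Rabs c * (eps / (Rabs c + 1)) < eps).
    { pose proof (Rabs_pos c). apply Rmult_lt_reg_r with (Rabs c + 1). lra.
      field_simplify; lra. }
    lra.
Qed.

Section Dom.
Variable g h : R -> R.
Hypothesis Hgi : forall u v, 0 < u -> u <= v -> v < 1 -> ex_RInt g u v.
Hypothesis Hhi : forall u v, 0 < u -> u <= v -> v < 1 -> ex_RInt h u v.
Hypothesis Hgh : forall x, 0 < x < 1 -> 0 <= g x <= h x.

Lemma RInt_split u u0 v0 v : 0 < u -> u <= u0 -> u0 <= v0 -> v0 <= v -> v < 1 ->
  forall k, (forall u v, 0 < u -> u <= v -> v < 1 -> ex_RInt k u v) ->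
  RInt k u v = RInt k u u0 + RInt k u0 v0 + RInt k v0 v.
Proof.
  intros. rewrite <- (RInt_Chasles k u u0 v); try (apply H4; lra).
  rewrite <- (RInt_Chasles k u0 v0 v); try (apply H4; lra).
  change (plus (RInt k u u0) (plus (RInt k u0 v0) (RInt k v0 v)) = RInt k u u0 + RInt k u0 v0 + RInt k v0 v).
  unfold plus; simpl. ring.
Qed.

Lemma tail_cmp u u0 v0 v : 0 < u -> u <= u0 -> u0 <= v0 -> v0 <= v -> v < 1 ->
  0 <= RInt g u v - RInt g u0 v0 <= RInt h u v - RInt h u0 v0.
Proof.
  intros. rewrite (RInt_split u u0 v0 v) with (k := g) by auto.
  rewrite (RInt_split u u0 v0 v) with (k := h) by auto.
  assert (0 <= RInt g u u0) by (apply RInt_ge_0; auto; [apply Hgi; lra| intros; apply Hgh; lra]).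
  assert (0 <= RInt g v0 v) by (apply RInt_ge_0; auto; [apply Hgi; lra| intros; apply Hgh; lra]).
  assert (RInt g u u0 <= RInt h u u0) by (apply RInt_le; auto; [apply Hgi; lra|apply Hhi; lra| intros; apply Hgh; lra]).
  assert (RInt g v0 v <= RInt h v0 v) by (apply RInt_le; auto; [apply Hgi; lra|apply Hhi; lra| intros; apply Hgh; lra]).
  lra.
Qed.

Lemma small_d d1 d2 : 0 < d1 -> 0 < d2 -> exists d, 0 < d /\ d <= d1 /\ d <= d2 /\ d <= 1/2.
Proof.
  intros. exists (Rmin (Rmin d1 d2) (1/2)). repeat split.
  repeat apply Rmin_pos; lra.
  eapply Rle_trans; [apply Rmin_l|apply Rmin_l].
  eapply Rle_trans; [apply Rmin_l|apply Rmin_r].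
  apply Rmin_r.
Qed.

Lemma tail_lim L l u0 v0 : int01' g L -> int01' h l -> 0 < u0 -> u0 <= v0 -> v0 < 1 ->
  0 <= L - RInt g u0 v0 <= l - RInt h u0 v0.
Proof.
  intros [_ HL] [_ Hl] Hu0 Huv Hv0.
  assert (forall eps, 0 < eps -> -eps <= L - RInt g u0 v0 <= l - RInt h u0 v0 + 2 * eps).
  { intros eps He. destruct (HL eps He) as [d1 [Hd1 P1]]. destruct (Hl eps He) as [d2 [Hd2 P2]].
    destruct (small_d d1 d2 Hd1 Hd2) as [d [Hd [Hd1' [Hd2' Hd3]]]].
    set (u := Rmin (d/2) u0). set (v := Rmax (1 - d/2) v0).
    assert (0 < u /\ u < d /\ u <= u0) by (unfold u; repeat split; [apply Rmin_pos; lra| eapply Rle_lt_trans; [apply Rmin_l|lra] | apply Rmin_r]).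
    assert (1 - d < v /\ v < 1 /\ v0 <= v) by (unfold v; repeat split; [eapply Rlt_le_trans; [|apply Rmax_l]; lra| apply Rmax_lub_lt; lra| apply Rmax_r]).
    specialize (P1 u v ltac:(lra) ltac:(lra) ltac:(lra)).
    specialize (P2 u v ltac:(lra) ltac:(lra) ltac:(lra)).
    apply Rabs_def2 in P1. apply Rabs_def2 in P2.
    pose proof (tail_cmp u u0 v0 v ltac:(lra) ltac:(lra) Huv ltac:(lra) ltac:(lra)). lra. }
  split.
  - destruct (Rle_dec 0 (L - RInt g u0 v0)); auto. exfalso.
    specialize (H (- (L - RInt g u0 v0) / 2) ltac:(lra)). lra.
  - destruct (Rle_dec (L - RInt g u0 v0) (l - RInt h u0 v0)); auto. exfalso.
    specialize (H (((L - RInt g u0 v0) - (l - RInt h u0 v0)) / 4) ltac:(lra)). lra.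
Qed.

Lemma int01'_exists B : (forall u v, 0 < u -> u <= v -> v < 1 -> RInt g u v <= B) ->
  exists L, int01' g L.
Proof.
  intros HB.
  set (E := fun y => exists u v, 0 < u /\ u <= v /\ v < 1 /\ y = RInt g u v).
  assert (HE : exists y, E y) by (exists (RInt g (1/2) (1/2)); exists (1/2), (1/2); repeat split; lra).
  assert (Hb : bound E) by (exists B; intros y [u [v [? [? [? ->]]]]]; apply HB; auto).
  destruct (completeness E Hb HE) as [L [Hub Hlub]].
  exists L. split; auto.
  intros eps He.
  destruct (classic (exists y, E y /\ L - eps < y)) as [[y [[u0 [v0 [Hu0 [Huv0 [Hv0 ->]]]]] Hy]]|Hn].
  - set (d := Rmin u0 (1 - v0)). exists d. split. unfold d; apply Rmin_pos; lra.
    intros u v Hu Hv Huv.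
    assert (u <= u0) by (pose proof (Rmin_l u0 (1 - v0)); fold d in H; lra).
    assert (v0 <= v) by (pose proof (Rmin_r u0 (1 - v0)); fold d in H0; lra).
    pose proof (tail_cmp u u0 v0 v ltac:(lra) H Huv0 H0 ltac:(lra)).
    assert (RInt g u v <= L) by (apply Hub; exists u, v; repeat split; lra).
    apply Rabs_def1; lra.
  - exfalso. assert (L <= L - eps). apply Hlub. intros y Hy.
    destruct (Rle_dec y (L - eps)); auto. exfalso. apply Hn. exists y. split; auto. lra. lra.
Qed.

End Dom.

Lemma int01'_le h l u v : int01' h l -> (forall x, 0 < x < 1 -> 0 <= h x) ->
  0 < u -> u <= v -> v < 1 -> RInt h u v <= l.
Proof.
  intros Hh H0 Hu Huv Hv.
  assert (int01' h l) as Hh' by auto. destruct Hh' as [Hi _].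
  pose proof (tail_lim h h Hi Hi (fun x Hx => conj (H0 x Hx) (Rle_refl _)) l l u v Hh Hh Hu Huv Hv). lra.
Qed.


Lemma unif_ex_RInt (fs : nat -> R -> R) f u v : u <= v -> (forall N, ex_RInt (fs N) u v) ->
  (forall eps, 0 < eps -> exists M, forall N x, (M <= N)%nat -> u <= x <= v -> Rabs (fs N x - f x) <= eps) ->
  ex_RInt f u v.
Proof.
  intros Huv Hi Hu.
  set (cl := fun x => Rmax u (Rmin v x)).
  assert (Hcl : forall x, u <= x <= v -> cl x = x).
  { intros x Hx. unfold cl. rewrite Rmin_right by lra. rewrite Rmax_right by lra. auto. }
  assert (Hcl2 : forall x, u <= cl x <= v).
  { intros x. unfold cl. split. apply Rmax_l. apply Rmax_lub. auto. apply Rmin_l. }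
  set (gs := fun N x => fs N (cl x)). set (G := fun x => f (cl x)).
  assert (Hgs : forall N, is_RInt (gs N) u v (RInt (fs N) u v)).
  { intros N. apply is_RInt_ext with (fs N). intros x Hx. rewrite Rmin_left in Hx by auto.
    rewrite Rmax_right in Hx by auto. unfold gs. rewrite Hcl; auto; lra.
    apply (RInt_correct (V := R_CompleteNormedModule)). auto. }
  assert (Hlim : filterlim gs eventually (@locally (fct_UniformSpace R R_UniformSpace) G)).
  { apply filterlim_locally. intros eps. destruct (Hu (eps/2)) as [M HM]. destruct eps; simpl; lra.
    exists M. intros N HN t. change (Rabs (gs N t - G t) < eps). unfold gs, G.
    specialize (HM N (cl t) HN (Hcl2 t)). destruct eps; simpl in *; lra. }
  destruct (filterlim_RInt (V := R_CompleteNormedModule) gs u v eventually eventually_filter G (fun N => RInt (fs N) u v) Hgs Hlim) as [If [_ HIf]].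
  apply ex_RInt_ext with G. intros x Hx. rewrite Rmin_left in Hx by auto.
  rewrite Rmax_right in Hx by auto. unfold G. rewrite Hcl; auto; lra.
  exists If. auto.
Qed.

Lemma DCT (fs : nat -> R -> R) f h l N0 :
  (forall N u v, 0 < u -> u <= v -> v < 1 -> ex_RInt (fs N) u v) ->
  (forall N x, (N0 <= N)%nat -> 0 < x < 1 -> 0 <= fs N x <= h x) ->
  (forall x, 0 < x < 1 -> 0 <= f x <= h x) ->
  int01' h l ->
  (forall u v, 0 < u -> u <= v -> v < 1 -> forall eps, 0 < eps -> exists M, forall N x,
      (M <= N)%nat -> u <= x <= v -> Rabs (fs N x - f x) <= eps) ->
  exists L, int01' f L /\ (forall N, (N0 <= N)%nat -> exists LN, int01' (fs N) LN) /\
    forall eps, 0 < eps -> exists M, forall N LN, (M <= N)%nat -> int01' (fs N) LN -> Rabs (LN - L) < eps.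
Proof.
  intros H1 H2 H3 H4 H5.
  assert (Hhi := proj1 H4).
  assert (Hh0 : forall x, 0 < x < 1 -> 0 <= h x) by (intros x Hx; specialize (H3 x Hx); lra).
  assert (Hfi : forall u v, 0 < u -> u <= v -> v < 1 -> ex_RInt f u v).
  { intros u v Hu Huv Hv. apply (unif_ex_RInt fs f u v Huv); auto. }
  destruct (int01'_exists f h Hfi Hhi H3 l) as [L HL].
  { intros u v Hu Huv Hv. eapply Rle_trans. apply (RInt_le f h u v); auto. intros; apply H3; lra.
    apply (int01'_le h l u v H4 Hh0 Hu Huv Hv). }
  exists L. split; auto. split.
  - intros N HN. apply (int01'_exists (fs N) h (H1 N) Hhi (fun x Hx => H2 N x HN Hx) l).
    intros u v Hu Huv Hv. eapply Rle_trans. apply (RInt_le (fs N) h u v); auto. intros; apply H2; auto; lra.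
    apply (int01'_le h l u v H4 Hh0 Hu Huv Hv).
  - intros eps He. destruct (proj2 H4 (eps/4) ltac:(lra)) as [d [Hd Pd]].
    destruct (small_d d d Hd Hd) as [d' [Hd' [Hdd [_ Hd2]]]].
    set (u0 := d'/2). set (v0 := 1 - d'/2).
    specialize (Pd u0 v0 ltac:(unfold u0; lra) ltac:(unfold v0; lra) ltac:(unfold u0, v0; lra)).
    apply Rabs_def2 in Pd.
    destruct (H5 u0 v0 ltac:(unfold u0; lra) ltac:(unfold u0, v0; lra) ltac:(unfold v0; lra) (eps/4) ltac:(lra)) as [M HM].
    exists (max M N0). intros N LN HN HLN.
    pose proof (tail_lim (fs N) h (H1 N) Hhi (fun x Hx => H2 N x ltac:(lia) Hx) LN l u0 v0 HLN H4
      ltac:(unfold u0; lra) ltac:(unfold u0, v0; lra) ltac:(unfold v0; lra)) as T1.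
    pose proof (tail_lim f h Hfi Hhi H3 L l u0 v0 HL H4
      ltac:(unfold u0; lra) ltac:(unfold u0, v0; lra) ltac:(unfold v0; lra)) as T2.
    assert (Hex1 : ex_RInt (fs N) u0 v0) by (apply H1; unfold u0, v0; lra).
    assert (Hex2 : ex_RInt f u0 v0) by (apply Hfi; unfold u0, v0; lra).
    assert (Hexm : ex_RInt (fun x => fs N x - f x) u0 v0) by exact (ex_RInt_minus (V := R_NormedModule) _ _ _ _ Hex1 Hex2).
    assert (Hm : Rabs (RInt (fun x => fs N x - f x) u0 v0) <= (v0 - u0) * (eps/4)).
    { apply (abs_RInt_le_const (fun x => fs N x - f x) u0 v0 (eps/4)). unfold u0, v0; lra. exact Hexm.
      intros t Ht. apply (HM N t ltac:(lia) Ht). }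
    assert (Heq : RInt (fun x => fs N x - f x) u0 v0 = RInt (fs N) u0 v0 - RInt f u0 v0)
      by exact (RInt_minus (V := R_CompleteNormedModule) _ _ _ _ Hex1 Hex2).
    rewrite Heq in Hm.
    assert (Hv0u0 : (v0 - u0) * (eps/4) <= eps/4).
    { unfold u0, v0. rewrite <- (Rmult_1_l (eps/4)) at 2. apply Rmult_le_compat_r; lra. }
    apply Rabs_le_between in Hm.
    clear - Hm Hv0u0 T1 T2 Pd He.
    apply Rabs_def1; lra.
Qed.


Lemma cont_mul (f g : R -> R) x : continuous f x -> continuous g x -> continuous (fun y => f y * g y) x.
Proof. intros. exact (continuous_mult f g x H H0). Qed.
Lemma cont_plus (f g : R -> R) x : continuous f x -> continuous g x -> continuous (fun y => f y + g y) x.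
Proof. intros. exact (continuous_plus (V := R_NormedModule) f g x H H0). Qed.
Lemma cont_minus (f g : R -> R) x : continuous f x -> continuous g x -> continuous (fun y => f y - g y) x.
Proof. intros. exact (continuous_minus (V := R_NormedModule) f g x H H0). Qed.
Lemma cont_const (c : R) x : continuous (fun _ : R => c) x.
Proof. exact (continuous_const (U := R_UniformSpace) (V := R_UniformSpace) c x). Qed.
Lemma cont_id x : continuous (fun y : R => y) x.
Proof. exact (continuous_id (U := R_UniformSpace) x). Qed.
Lemma cont_inv (f : R -> R) x : continuous f x -> f x <> 0 -> continuous (fun y => / f y) x.
Proof. intros. exact (continuous_Rinv_comp f x H H0). Qed.
Lemma cont_div (f g : R -> R) x : continuous f x -> continuous g x -> g x <> 0 -> continuous (fun y => f y / g y) x.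
Proof. intros. unfold Rdiv. apply cont_mul; auto. apply cont_inv; auto. Qed.
Lemma cont_pow (f : R -> R) n x : continuous f x -> continuous (fun y => f y ^ n) x.
Proof. intros H. induction n; simpl. apply cont_const. apply cont_mul; auto. Qed.
Lemma cont_fsum n (G : nat -> R -> R) x : (forall k, continuous (G k) x) -> continuous (fun y => fsum n (fun k => G k y)) x.
Proof. intros H. induction n; simpl. apply cont_const. apply cont_plus; auto. Qed.
Lemma cont_fprod n (G : nat -> R -> R) x : (forall k, continuous (G k) x) -> continuous (fun y => fprod n (fun k => G k y)) x.
Proof. intros H. induction n; simpl. apply cont_const. apply cont_mul; auto. Qed.

Lemma cont_rpow p x : 0 < x -> continuous (fun y => rpow y p) x.
Proof.
  intros Hx. apply continuous_ext_loc with (fun y => exp (p * ln y)).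
  - assert (Hl : locally x (fun y : R => 0 < y)).
    { exists (mkposreal x Hx). intros y Hy. change (Rabs (y - x) < x) in Hy. apply Rabs_def2 in Hy. lra. }
    eapply filter_imp; [|exact Hl]. intros y Hy. simpl. rewrite rpow_pos_eq; auto.
  - apply continuous_exp_comp. apply cont_mul. apply cont_const. apply continuous_ln; auto.
Qed.

Lemma cont_ln_abs_pow n x : 0 < x -> continuous (fun y => Rabs (ln y) ^ n) x.
Proof. intros. apply cont_pow. apply continuous_Rabs_comp. apply continuous_ln; auto. Qed.

Definition fN (a : nat -> R) (j N : nat) (x : R) : R :=
  / INR (fact (j - 1)) * (fsum N (tt a j x) * FNfun a N x * Rabs (ln x) ^ (j - 1) / x).

Lemma cont_fN a j N x : (forall k, 0 < a k) -> 0 < x < 1 -> continuous (fN a j N) x.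
Proof.
  intros Hpos Hx. unfold fN. apply cont_mul. apply cont_const.
  apply cont_div; [|apply cont_id|lra].
  apply cont_mul; [apply cont_mul|apply cont_ln_abs_pow; lra].
  - apply (cont_fsum N (fun k y => tt a j y k)). intros k. unfold tt.
    apply cont_div. apply cont_mul. apply cont_const. apply cont_rpow; lra.
    apply cont_minus. apply cont_const. apply cont_rpow; lra.
    pose proof (rpow_01 x (a k) Hx (Hpos k)). lra.
  - unfold FNfun. apply (cont_fprod N (fun k y => 1 - rpow y (a k))). intros k.
    apply cont_minus. apply cont_const. apply cont_rpow; lra.
Qed.

Lemma dom_helper c A B A' B' Cc x : 0 <= c -> 0 <= A <= A' -> 0 <= B <= B' -> 0 <= Cc -> 0 < x ->
  0 <= c * (A * B * Cc / x) <= c * (A' * B' * Cc / x).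
Proof.
  intros. assert (0 < / x) by (apply Rinv_0_lt_compat; auto). unfold Rdiv.
  split.
  - apply Rmult_le_pos; auto. repeat apply Rmult_le_pos; lra.
  - apply Rmult_le_compat_l; auto. apply Rmult_le_compat_r; [lra|].
    apply Rmult_le_compat_r; auto. apply Rmult_le_compat; lra.
Qed.

Lemma fact_pos j : 0 < / INR (fact (j - 1)).
Proof. apply Rinv_0_lt_compat. apply lt_0_INR. apply lt_O_fact. Qed.

Section S2.
Variables (a : nat -> R) (j : nat).
Hypothesis Hpos : forall k, 0 < a k.
Hypothesis Hinf : cv_infty a.
Hypothesis Hx : x_alpha a = 1.

Definition hdom (N0 : nat) (x : R) : R :=
  / INR (fact (j - 1)) * (Lfun a j x * FNfun a N0 x * Rabs (ln x) ^ (j - 1) / x).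

Lemma fN_dom N0 N x : (N0 <= N)%nat -> 0 < x < 1 -> 0 <= fN a j N x <= hdom N0 x.
Proof.
  intros HN Hx1. unfold fN, hdom. apply dom_helper; try lra.
  - left; apply fact_pos.
  - split. apply fsum_nonneg. intros; apply tt_nonneg; auto. apply LN_le_L; auto.
  - split. apply FN_nonneg; auto. apply FN_le_FN; auto.
  - apply pow_le. apply Rabs_pos.
Qed.

Lemma I_dom N0 x : 0 < x < 1 -> 0 <= I_integrand a j x <= hdom N0 x.
Proof.
  intros Hx1. unfold I_integrand, hdom. apply dom_helper; try lra.
  - left; apply fact_pos.
  - split. apply L_nonneg; auto. lra.
  - split. apply F_nonneg; auto. apply F_le_FN; auto.
  - apply pow_le. apply Rabs_pos.
Qed.

Lemma cv0_eventually (s : nat -> R) e : Un_cv s 0 -> 0 < e -> exists M, forall N, (M <= N)%nat -> Rabs (s N) <= e.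
Proof. intros H He. destruct (H e He) as [M HM]. exists M. intros N HN. specialize (HM N HN).
  unfold Rdist in HM. rewrite Rminus_0_r in HM. lra. Qed.

Lemma fN_unif u v : 0 < u -> u <= v -> v < 1 -> forall eps, 0 < eps -> exists M, forall N x,
      (M <= N)%nat -> u <= x <= v -> Rabs (fN a j N x - I_integrand a j x) <= eps.
Proof.
  intros Hu Huv Hv eps He.
  set (c := / INR (fact (j - 1))). assert (Hc : 0 < c) by apply fact_pos.
  set (Cu := Rabs (ln u) ^ (j - 1) / u).
  assert (HCu : 0 <= Cu) by (unfold Cu; apply Rmult_le_pos; [apply pow_le, Rabs_pos|left; apply Rinv_0_lt_compat; lra]).
  destruct (summable_w a v Hx ltac:(lra)) as [Sv HSv].
  set (Lv := Lfun a j v). assert (HLv : 0 <= Lv) by (apply L_nonneg; auto; lra).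
  set (BL := fun N => Lv - fsum N (tt a j v)).
  set (BF := fun N => Sv - fsum N (PP a v)).
  assert (HBL : Un_cv BL 0).
  { replace 0 with (Lv - Lv) by ring. apply cv_minus_const. apply L_cv; auto; lra. }
  assert (HBF : Un_cv BF 0).
  { replace 0 with (Sv - Sv) by ring. apply cv_minus_const. exact HSv. }
  set (e1 := eps / (c * Cu * (1 + Lv) + 1)).
  assert (Hpc : 0 <= c * Cu * (1 + Lv)).
  { apply Rmult_le_pos. apply Rmult_le_pos; lra. lra. }
  assert (He1 : 0 < e1) by (unfold e1; apply Rdiv_lt_0_compat; lra).
  destruct (cv0_eventually BL e1 HBL He1) as [M1 HM1].
  destruct (cv0_eventually BF e1 HBF He1) as [M2 HM2].
  exists (max M1 M2). intros N x HN Hxr.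
  specialize (HM1 N ltac:(lia)). specialize (HM2 N ltac:(lia)).
  assert (Hx1 : 0 < x < 1) by lra.
  pose proof (L_tail a j Hpos Hinf Hx x v N ltac:(lra) Hv) as TL. fold Lv in TL.
  pose proof (F_tail a Hpos x v Sv N ltac:(lra) Hv HSv) as TF.
  pose proof (FN_nonneg a Hpos x N Hx1). pose proof (FN_le1 a Hpos x N Hx1).
  pose proof (L_le a j Hpos Hinf Hx x v ltac:(lra) Hv) as HLx. fold Lv in HLx.
  pose proof (L_nonneg a j Hpos Hinf Hx x Hx1).
  set (LN := fsum N (tt a j x)) in *. set (FNx := FNfun a N x) in *.
  set (Lx := Lfun a j x) in *. set (Fx := Ffun a x) in *.
  assert (Hq : 0 <= Rabs (ln x) ^ (j - 1) / x <= Cu).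
  { assert (Hlnu : ln u <= ln x) by (destruct (Req_dec u x); [subst; lra| left; apply ln_increasing; lra]).
    assert (ln x < 0) by (rewrite <- ln_1; apply ln_increasing; lra).
    unfold Cu. rewrite (Rabs_left (ln x)), (Rabs_left (ln u)) by lra.
    split. apply Rmult_le_pos. apply pow_le; lra. left; apply Rinv_0_lt_compat; lra.
    unfold Rdiv. apply Rmult_le_compat. apply pow_le; lra. left; apply Rinv_0_lt_compat; lra.
    apply pow_incr; lra. apply Rinv_le_contravar; lra. }
  set (q := Rabs (ln x) ^ (j - 1) / x) in *.
  unfold fN, I_integrand. fold c. fold LN FNx Lx Fx.
  replace (c * (LN * FNx * Rabs (ln x) ^ (j - 1) / x) - c * (Lx * Fx * Rabs (ln x) ^ (j - 1) / x))
    with (c * q * (LN * FNx - Lx * Fx)) by (unfold q; unfold Rdiv; ring).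
  assert (Hd : Rabs (LN * FNx - Lx * Fx) <= e1 + Lv * e1).
  { replace (LN * FNx - Lx * Fx) with (- ((Lx - LN) * FNx) + Lx * (FNx - Fx)) by ring.
    eapply Rle_trans. apply Rabs_triang. rewrite Rabs_Ropp, !Rabs_mult.
    rewrite (Rabs_right FNx) by lra. rewrite (Rabs_right (Lx - LN)) by lra.
    rewrite (Rabs_right Lx) by lra. rewrite (Rabs_right (FNx - Fx)) by lra.
    unfold BL, BF in *. rewrite Rabs_right in HM1 by lra. rewrite Rabs_right in HM2 by lra.
    apply Rplus_le_compat. nra. apply Rmult_le_compat; lra. }
  rewrite Rabs_mult, Rabs_right by (apply Rle_ge, Rmult_le_pos; lra).
  apply Rle_trans with (c * Cu * (e1 + Lv * e1)).
  apply Rmult_le_compat; try apply Rabs_pos; try (apply Rmult_le_pos; lra).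
  apply Rmult_le_compat_l; lra. auto.
  replace (c * Cu * (e1 + Lv * e1)) with ((c * Cu * (1 + Lv)) * e1) by ring.
  unfold e1. set (K := c * Cu * (1 + Lv)) in *.
  apply Rmult_le_reg_r with (K + 1). lra.
  replace (K * (eps / (K + 1)) * (K + 1)) with (K * eps) by (field; lra). nra.
Qed.
End S2.


Lemma EU_id a j N t : (forall k, 0 < a k) -> (1 <= j)%nat -> 0 < t ->
  EU_integrand a j N t = exp (- t) * fN a j N (exp (- t)).
Proof.
  intros Hpos Hj Ht. set (x := exp (- t)).
  assert (Hx : 0 < x < 1).
  { unfold x. split. apply exp_pos. rewrite <- exp_0. apply exp_increasing. lra. }
  assert (Hlx : ln x = - t) by (unfold x; apply ln_exp).
  assert (HE : forall i, exp (- (a i * t)) = rpow x (a i)).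
  { intros i. rewrite rpow_pos_eq by lra. rewrite Hlx. f_equal. ring. }
  unfold EU_integrand, fN.
  set (c := / INR (fact (j - 1))).
  assert (Hc : INR (fact (j - 1)) <> 0) by (apply not_0_INR; apply fact_neq_0).
  rewrite (fsum_ext_lt N _ (fun k => tt a j x k * (c * t ^ (j - 1) * FNfun a N x))).
  - rewrite fsum_scal_r. rewrite Hlx, Rabs_left by lra. rewrite Ropp_involutive.
    field. unfold x. apply Rgt_not_eq, exp_pos.
  - intros k Hk. rewrite HE.
    assert (Hr := fprod_remove N k (fun i => 1 - rpow x (a i)) Hk).
    rewrite (fprod_ext_lt N (fun i => if Nat.eq_dec i k then 1 else 1 - exp (- (a i * t)))
               (fun i => if Nat.eq_dec i k then 1 else 1 - rpow x (a i))).
    2: { intros i _. destruct (Nat.eq_dec i k); auto. rewrite HE; auto. }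
    unfold FNfun. rewrite <- Hr. unfold tt.
    pose proof (rpow_01 x (a k) Hx (Hpos k)).
    replace j with (S (j - 1)) at 3 by lia. simpl pow. rewrite Rpow_mult_distr.
    unfold c. field. split; lra.
Qed.

Lemma exp_neg_01 t : 0 < t -> 0 < exp (- t) < 1.
Proof. intros. split. apply exp_pos. rewrite <- exp_0. apply exp_increasing. lra. Qed.

Lemma exp_neg_le u v : u <= v -> exp (- v) <= exp (- u).
Proof. intros. destruct (Req_dec u v). subst; lra. left; apply exp_increasing; lra. Qed.

Lemma chvar_RInt (Fc Eg : R -> R) u v :
  (forall x, 0 < x < 1 -> continuous Fc x) -> (forall t, 0 < t -> Eg t = exp (- t) * Fc (exp (- t))) ->
  0 < u -> u <= v -> is_RInt Eg u v (RInt Fc (exp (- v)) (exp (- u))).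
Proof.
  intros Hc HE Hu Huv.
  assert (Hcomp := is_RInt_comp (V := R_CompleteNormedModule) Fc (fun t => exp (- t)) (fun t => - exp (- t)) u v).
  rewrite Rmin_left in Hcomp by auto. rewrite Rmax_right in Hcomp by auto.
  assert (H1 : forall x, u <= x <= v -> continuous Fc (exp (- x))).
  { intros x Hx. apply Hc. apply exp_neg_01. lra. }
  assert (H2 : forall x, u <= x <= v -> is_derive (fun t => exp (- t)) x (- exp (- x)) /\ continuous (fun t => - exp (- t)) x).
  { intros x Hx. split. auto_derive. auto. ring.
    apply (continuous_opp (V := R_NormedModule) (fun t => exp (- t))).
    apply continuous_exp_comp. apply (continuous_opp (V := R_NormedModule) (fun t => t)). apply continuous_id. }
  specialize (Hcomp H1 H2).
  apply is_RInt_opp in Hcomp.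
  assert (Hex : ex_RInt Fc (exp (- u)) (exp (- v))).
  { apply (ex_RInt_continuous (V := R_CompleteNormedModule)). intros z Hz. apply Hc.
    pose proof (exp_neg_01 u Hu). pose proof (exp_neg_01 v ltac:(lra)). pose proof (exp_neg_le u v Huv).
    rewrite Rmin_right in Hz by lra. rewrite Rmax_left in Hz by lra. lra. }
  rewrite <- (opp_RInt_swap Fc _ _ Hex).
  apply is_RInt_ext with (2 := Hcomp).
  intros x Hx. rewrite Rmin_left in Hx by auto. rewrite Rmax_right in Hx by auto.
  rewrite HE by lra. change (- (- exp (- x) * Fc (exp (- x))) = exp (- x) * Fc (exp (- x))). ring.
Qed.

Lemma chvar (Fc Eg : R -> R) l :
  (forall x, 0 < x < 1 -> continuous Fc x) -> (forall t, 0 < t -> Eg t = exp (- t) * Fc (exp (- t))) ->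
  int01' Fc l -> int0inf_cv Eg l.
Proof.
  intros Hc HE [_ Hl]. split.
  - intros u v Hu Huv. constructor. apply ex_RInt_Reals_0. eexists. apply chvar_RInt; auto.
  - intros eps He. destruct (Hl eps He) as [d [Hd P]].
    destruct (small_d d d Hd Hd) as [d' [Hd' [Hdd [_ Hd2]]]].
    exists (- ln (1 - d')), (- ln d'). split.
    + assert (ln (1 - d') < 0) by (rewrite <- ln_1; apply ln_increasing; lra). lra.
    + intros u v pr Hu Hv Huv. rewrite <- (RInt_Reals Eg u v pr).
      rewrite (is_RInt_unique Eg u v _ (chvar_RInt Fc Eg u v Hc HE ltac:(lra) Huv)).
      apply P.
      * split. apply exp_pos. apply Rlt_le_trans with d'; auto. rewrite <- (exp_ln d') by lra. apply exp_increasing. lra.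
      * split. apply Rle_lt_trans with (1 - d'). lra. rewrite <- (exp_ln (1 - d')) by lra. apply exp_increasing. lra.
        apply exp_neg_01; lra.
      * apply exp_neg_le; auto.
Qed.

Lemma int0inf_unique g l1 l2 : int0inf_cv g l1 -> int0inf_cv g l2 -> l1 = l2.
Proof.
  intros [Hi H1] [_ H2]. apply Rminus_diag_uniq. apply Rabs_eq_0.
  destruct (Rle_lt_or_eq_dec 0 (Rabs (l1 - l2)) (Rabs_pos _)) as [Hp|]; auto. exfalso.
  set (e := Rabs (l1 - l2) / 2).
  destruct (H1 e ltac:(unfold e; lra)) as [d1 [M1 [Hd1 P1]]].
  destruct (H2 e ltac:(unfold e; lra)) as [d2 [M2 [Hd2 P2]]].
  set (u := Rmin d1 d2 / 2). set (v := Rmax (Rmax M1 M2) u + 1).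
  assert (0 < Rmin d1 d2) by (apply Rmin_pos; auto).
  assert (u < d1 /\ u < d2) by (unfold u; pose proof (Rmin_l d1 d2); pose proof (Rmin_r d1 d2); lra).
  assert (M1 < v /\ M2 < v /\ u <= v) by (unfold v; pose proof (Rmax_l (Rmax M1 M2) u); pose proof (Rmax_r (Rmax M1 M2) u);
     pose proof (Rmax_l M1 M2); pose proof (Rmax_r M1 M2); lra).
  assert (0 < u) by (unfold u; lra).
  destruct (Hi u v ltac:(lra) ltac:(lra)) as [pr].
  specialize (P1 u v pr ltac:(lra) ltac:(lra) ltac:(lra)).
  specialize (P2 u v pr ltac:(lra) ltac:(lra) ltac:(lra)).
  apply Rabs_def2 in P1. apply Rabs_def2 in P2.
  assert (Rabs (l1 - l2) < 2 * e) by (apply Rabs_def1; lra). unfold e in *. lra.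
Qed.


Theorem proposition3 (a : nat -> R) (j : nat)
  (Hpos : forall k, 0 < a k)
  (Hinf : cv_infty a)
  (Hx : x_alpha a = 1)
  (Hj : (2 <= j)%nat)
  (HN0 : exists (N0 : nat) (l : R),
     int01_cv (fun x => Lfun a j x * FNfun a N0 x * Rabs (ln x) ^ (j - 1) / x) l) :
  int01_cv (I_integrand a j) (Ival a j) /\
  Un_cv (fun N => EU a j N) (Ival a j).
Proof.
  destruct HN0 as [N0 [l0 Hl0]].
  apply int01_iff in Hl0.
  assert (Hh : int01' (hdom a j N0) (/ INR (fact (j-1)) * l0)) by exact (int01'_scal _ l0 _ Hl0).
  destruct (DCT (fN a j) (I_integrand a j) (hdom a j N0) (/ INR (fact (j-1)) * l0) N0) as [L [HL [Hex Hcv]]].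
  - intros N u v Hu Huv Hv. apply (ex_RInt_continuous (V := R_CompleteNormedModule)).
    intros z Hz. rewrite Rmin_left in Hz by auto. rewrite Rmax_right in Hz by auto.
    apply cont_fN; auto; lra.
  - intros N x HN Hx1. apply fN_dom; auto.
  - intros x Hx1. apply I_dom; auto.
  - exact Hh.
  - intros u v Hu Huv Hv. apply fN_unif; auto.
  - assert (HI : int01_cv (I_integrand a j) (Ival a j)).
    { unfold Ival, int01. apply epsilon_spec. exists L. apply int01_iff; auto. }
    split; auto.
    assert (IL : Ival a j = L).
    { apply int01'_unique with (I_integrand a j); auto. apply int01_iff; auto. }
    rewrite IL. intros eps He. destruct (Hcv eps He) as [M HM]. exists (max M N0). intros N HN.
    destruct (Hex N ltac:(lia)) as [LN HLN].
    assert (Hc : int0inf_cv (EU_integrand a j N) LN).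
    { apply chvar with (fN a j N); auto. intros; apply cont_fN; auto.
      intros; apply EU_id; auto; lia. }
    assert (HE : EU a j N = LN).
    { unfold EU, int0inf. apply int0inf_unique with (EU_integrand a j N); auto. apply epsilon_spec. eauto. }
    unfold R_dist. rewrite HE. apply (HM N LN); auto; lia.
Qed.
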